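(* Let $k\ge 1$ and let $\Delta^+=\{(\vec x,\vec y)\in\mathbb R^k\times\mathbb R^k:\ x_i<y_i \text{ for all } i=1,\dots,k\}$. Call a pair $(\vec l,\vec b)\in\mathbb R^k\times\mathbb R^k$ admissible if $\vec l=(l_1,\dots,l_k)$ is a unit vector (Euclidean norm $1$) with $l_i>0$ for every $i$, and $\vec b=(b_1,\dots,b_k)$ satisfies $\sum_{i=1}^k b_i=0$. For an admissible pair let $\pi_{(\vec l,\vec b)}=\{(s\vec l+\vec b,\ t\vec l+\vec b): s,t\in\mathbb R,\ s<t\}\subseteq\mathbb R^k\times\mathbb R^k$. Then for every $(\vec x,\vec y)\in\Delta^+$ there exists one and only one admissible pair $(\vec l,\vec b)$ such that $(\vec x,\vec y)\in\pi_{(\vec l,\vec b)}$. *)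

(* Defs.v *)
From HB Require Import structures.
From mathcomp Require Import all_boot all_order all_algebra.
From mathcomp Require Import reals.
Set Implicit Arguments. Unset Strict Implicit. Unset Printing Implicit Defensive.
Import Order.TTheory GRing.Theory Num.Theory.
Local Open Scope ring_scope.

Definition in_Delta_plus (R : realType) (k : nat) (x y : 'rV[R]_k) : Prop :=
  forall i : 'I_k, x 0 i < y 0 i.

Definition enorm (R : realType) (k : nat) (v : 'rV[R]_k) : R :=
  Num.sqrt (\sum_(i < k) v 0 i ^+ 2).

Definition admissible (R : realType) (k : nat) (l b : 'rV[R]_k) : Prop :=
  enorm l = 1 /\ (forall i : 'I_k, 0 < l 0 i) /\ \sum_(i < k) b 0 i = 0.

Definition in_pi (R : realType) (k : nat) (l b x y : 'rV[R]_k) : Prop :=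
  exists s t : R, s < t /\ x = s *: l + b /\ y = t *: l + b.

(* Main.v *)
Require Import Defs.
From HB Require Import structures.
From mathcomp Require Import all_boot all_order all_algebra.
From mathcomp Require Import reals.
From mathcomp Require Import lra.
Import Order.TTheory GRing.Theory Num.Theory.
Local Open Scope ring_scope.

Lemma sum_pos (R : realType) (k : nat) (f : 'I_k -> R) :
  (1 <= k)%N -> (forall i, 0 < f i) -> 0 < \sum_(i < k) f i.
Proof.
case: k f => [//|k] f _ hf.
rewrite big_ord_recl.
have h1 := hf ord0.
have h2 : 0 <= \sum_(i < k) f (lift ord0 i).
  by apply: sumr_ge0 => i _; apply: ltW.
lra.
Qed.

Lemma enormZ (R : realType) (k : nat) (c : R) (v : 'rV[R]_k) :
  enorm (c *: v) = `|c| * enorm v.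
Proof.
rewrite /enorm.
have -> : \sum_(i < k) (c *: v) 0 i ^+ 2 = c ^+ 2 * \sum_(i < k) v 0 i ^+ 2.
  rewrite mulr_sumr; apply: eq_bigr => i _; by rewrite mxE exprMn.
rewrite sqrtrM ?sqr_ge0 // sqrtr_sqr //.
Qed.

Lemma enorm_pos (R : realType) (k : nat) (v : 'rV[R]_k) :
  (1 <= k)%N -> (forall i, 0 < v 0 i) -> 0 < enorm v.
Proof.
move=> hk hv; rewrite /enorm sqrtr_gt0.
apply: sum_pos => // i; apply: exprn_gt0; exact: hv.
Qed.

Lemma sum_entries (R : realType) (k : nat) (s : R) (l b : 'rV[R]_k) :
  \sum_(i < k) (s *: l + b) 0 i = s * \sum_(i < k) l 0 i + \sum_(i < k) b 0 i.
Proof.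
rewrite mulr_sumr -big_split; apply: eq_bigr => i _; by rewrite !mxE.
Qed.

Lemma key (R : realType) (k : nat) (hk : (1 <= k)%N) (x y l b : 'rV[R]_k) :
  admissible l b -> in_pi l b x y ->
  l = (enorm (y - x))^-1 *: (y - x) /\
  b = x - ((\sum_(i < k) x 0 i) / (\sum_(i < k) l 0 i)) *: l.
Proof.
move=> [hn [hl hb]] [s [t [hst [hx hy]]]].
have hd : y - x = (t - s) *: l.
  by rewrite hx hy scalerBl; apply/rowP => i; rewrite !mxE; lra.
have hts : 0 < t - s by lra.
have hen : enorm (y - x) = t - s by rewrite hd enormZ hn mulr1 gtr0_norm.
have hL : l = (enorm (y - x))^-1 *: (y - x).
  by rewrite hen hd scalerA mulVf ?scale1r // gt_eqF.
split => //.
have hsl := @sum_pos _ _ _ hk hl.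
have -> : \sum_(i < k) x 0 i = s * \sum_(i < k) l 0 i.
  by rewrite hx sum_entries hb addr0.
rewrite mulfK ?gt_eqF // hx.
by apply/rowP => i; rewrite !mxE; lra.
Qed.

Theorem proposition2p2 (R : realType) (k : nat) (hk : (1 <= k)%N)
  (x y : 'rV[R]_k) :
  in_Delta_plus x y ->
  exists! lb : 'rV[R]_k * 'rV[R]_k,
    admissible lb.1 lb.2 /\ in_pi lb.1 lb.2 x y.
Proof.
move=> hD.
set d := y - x.
have hdp : forall i, 0 < d 0 i by move=> i; rewrite !mxE; have := hD i; lra.
set n := enorm d.
have hn : 0 < n by apply: enorm_pos.
set l0 := n^-1 *: d.
have hl0 : forall i, 0 < l0 0 i.
  by move=> i; rewrite mxE; apply: mulr_gt0; [rewrite invr_gt0|].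
set c := (\sum_(i < k) x 0 i) / (\sum_(i < k) l0 0 i).
set b0 := x - c *: l0.
have hsl := @sum_pos _ _ _ hk hl0.
exists (l0, b0); split.
  split.
    split.
      by rewrite /l0 enormZ gtr0_norm ?invr_gt0 // mulVf // gt_eqF.
    split => //.
    have -> : \sum_(i < k) b0 0 i = \sum_(i < k) x 0 i - c * \sum_(i < k) l0 0 i.
      rewrite mulr_sumr -sumrB; apply: eq_bigr => i _; by rewrite !mxE.
    by rewrite /c mulfVK ?gt_eqF // subrr.
  exists c, (c + n); split; first lra.
  split.
    by apply/rowP => i; rewrite /b0 !mxE; lra.
  have hnd : n *: l0 = d by rewrite /l0 scalerA mulfV ?scale1r // gt_eqF.
  rewrite /b0 scalerDl hnd /d.
  by apply/rowP => i; rewrite !mxE; lra.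
move=> [l b] /= [ha hp].
have [-> ->] := @key _ _ hk _ _ _ _ ha hp.
by [].
Qed.
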